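(* Let $u=u(t,x)$ be a smooth function on $[0,T)\times S^1$ and let $\eta$ be its flow, i.e. $\eta:[0,T)\times\mathbb{R}\to\mathbb{R}$ with $\eta(t,x+1)=\eta(t,x)+1$, $\partial_t\eta(t,x)=u(t,\eta(t,x))$, $\eta(0,x)=x$. Then $u$ is a solution of the $\mu$B equation $$u_{txx}+3u_xu_{xx}+uu_{xxx}=0$$ if and only if the horizontal component of the acceleration of $\eta$ vanishes, i.e. $$P_\eta\nabla_{\dot\eta}\dot\eta=\partial_t^2\eta(t,x)-\int_0^1\partial_t^2\eta(t,y)\,dy=0\quad\text{for all }t,x.$$ Moreover, if $u$ is such a solution with $u(0,\cdot)=u_0$, then $\eta(t,x)=x+t\big(u_0(x)-u_0(0)\big)+\eta(t,0)$ for all $x\in[0,1]$ and all sufficiently small $t\ge0$.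
   Context: $S^1=\mathbb{R}/\mathbb{Z}\simeq[0,1)$. On the group of circle diffeomorphisms equipped with the $L^2$ metric $\langle V,W\rangle=\int_0^1V(x)W(x)\,dx$ on each tangent space, the Levi-Civita covariant derivative along a curve $\eta(t)$ satisfies $\nabla_{\dot\eta}\dot\eta=\ddot\eta=\partial_t^2\eta$, and the horizontal projection for the Riemannian submersion onto the quotient by rotations is $P_\eta(W)=W-\int_0^1W(x)\,dx$. *)

(* Defs.v *)
From Stdlib Require Import Reals List.
From Coquelicot Require Import Coquelicot.
Open Scope R_scope.

Definition pt (f : R -> R -> R) : R -> R -> R :=
  fun t x => Derive (fun s => f s x) t.
Definition px (f : R -> R -> R) : R -> R -> R :=
  fun t x => Derive (fun y => f t y) x.

(* Iterated partial derivative: true = d/dt, false = d/dx;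
   the head of the list is applied last. *)
Fixpoint iter_partial (l : list bool) (f : R -> R -> R) : R -> R -> R :=
  match l with
  | nil => f
  | b :: l' => if b then pt (iter_partial l' f) else px (iter_partial l' f)
  end.

Definition smooth_on (D : R -> R -> Prop) (f : R -> R -> R) : Prop :=
  forall l : list bool, forall t x, D t x ->
    ex_derive (fun s => iter_partial l f s x) t /\
    ex_derive (fun y => iter_partial l f t y) x /\
    continuous (fun p : R * R => iter_partial l f (fst p) (snd p)) (t, x).

Definition muB_lhs (u : R -> R -> R) (t x : R) : R :=
  px (px (pt u)) t x + 3 * px u t x * px (px u) t x + u t x * px (px (px u)) t x.

Definition horiz_accel (eta : R -> R -> R) (t x : R) : R :=
  pt (pt eta) t x - RInt (fun y => pt (pt eta) t y) 0 1.

(* Main.v *)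
Require Import Defs.
From Stdlib Require Import Reals Lra List.
From Coquelicot Require Import Coquelicot.
Open Scope R_scope.

Lemma cont2d_of_cont (f : R -> R -> R) t x :
  continuous (fun p : R * R => f (fst p) (snd p)) (t, x) -> continuity_2d_pt f t x.
Proof. intros H. apply continuity_2d_pt_filterlim. exact H. Qed.

Lemma locally_interval lo hi t : lo < t < hi -> locally t (fun s => lo < s < hi).
Proof.
  intros Ht.
  assert (Hd : 0 < Rmin (t - lo) (hi - t)) by (apply Rmin_pos; lra).
  exists (mkposreal _ Hd). intros s Hs.
  change (Rabs (s - t) < Rmin (t - lo) (hi - t)) in Hs.
  apply Rabs_def2 in Hs.
  pose proof (Rmin_l (t - lo) (hi - t)); pose proof (Rmin_r (t - lo) (hi - t)). lra.
Qed.

Lemma smooth_diff (f : R -> R -> R) (e T t x : R) :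
  smooth_on (fun t x => - e < t < T) f -> - e < t < T ->
  differentiable_pt_lim f t x (pt f t x) (px f t x).
Proof.
  intros Hs Ht.
  assert (Hloc : locally_2d (fun u v => ex_diff_n f 2 u v) t x).
  { assert (Hd : 0 < Rmin (t + e) (T - t)) by (apply Rmin_pos; lra).
    exists (mkposreal _ Hd). intros u v Hu Hv. simpl in Hu.
    assert (Hu' : - e < u < T).
    { apply Rabs_def2 in Hu. destruct Hu.
      pose proof (Rmin_l (t+e) (T-t)); pose proof (Rmin_r (t+e) (T-t)). lra. }
    destruct (Hs nil u v Hu') as [A1 [A2 A3]].
    destruct (Hs (true::nil) u v Hu') as [B1 [B2 B3]].
    destruct (Hs (false::nil) u v Hu') as [C1 [C2 C3]].
    destruct (Hs (true::true::nil) u v Hu') as [_ [_ D3]].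
    destruct (Hs (false::true::nil) u v Hu') as [_ [_ E3]].
    destruct (Hs (true::false::nil) u v Hu') as [_ [_ F3]].
    destruct (Hs (false::false::nil) u v Hu') as [_ [_ G3]].
    simpl in *.
    split; [apply cont2d_of_cont; exact A3|].
    split; [exact A1|]. split; [exact A2|].
    split.
    - split; [apply cont2d_of_cont; exact B3|].
      split; [exact B1|]. split; [exact B2|].
      split; split; try exact I; apply cont2d_of_cont; assumption.
    - split; [apply cont2d_of_cont; exact C3|].
      split; [exact C1|]. split; [exact C2|].
      split; split; try exact I; apply cont2d_of_cont; assumption. }
  destruct (Taylor_Lagrange_2d f 1 t x Hloc) as [D [d HD]].
  intros eps.
  assert (HD1 : 0 < Rabs D + 1) by (pose proof (Rabs_pos D); lra).
  assert (Hd: 0 < Rmin d (eps / (Rabs D + 1))).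
  { apply Rmin_pos. apply cond_pos. apply Rdiv_lt_0_compat. apply cond_pos. exact HD1. }
  exists (mkposreal _ Hd). intros u v Hu Hv. simpl in Hu, Hv.
  assert (Hu1 : Rabs (u - t) < d) by (eapply Rlt_le_trans; [exact Hu| apply Rmin_l]).
  assert (Hv1 : Rabs (v - x) < d) by (eapply Rlt_le_trans; [exact Hv| apply Rmin_l]).
  assert (Hu2 : Rabs (u - t) < eps / (Rabs D + 1)) by (eapply Rlt_le_trans; [exact Hu| apply Rmin_r]).
  assert (Hv2 : Rabs (v - x) < eps / (Rabs D + 1)) by (eapply Rlt_le_trans; [exact Hv| apply Rmin_r]).
  specialize (HD u v Hu1 Hv1).
  assert (Hpol : DL_pol 1 f t x (u - t) (v - x) = f t x + (pt f t x * (u - t) + px f t x * (v - x))).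
  { unfold DL_pol, differential, partial_derive. simpl. unfold Binomial.C. simpl. unfold pt, px. field. }
  rewrite Hpol in HD.
  set (M := Rmax (Rabs (u - t)) (Rabs (v - x))) in *.
  assert (HM : M < eps / (Rabs D + 1)) by (apply Rmax_lub_lt; assumption).
  assert (HM0 : 0 <= M) by (unfold M; eapply Rle_trans; [apply Rabs_pos| apply Rmax_l]).
  assert (HM1 : M * (Rabs D + 1) <= eps).
  { apply Rlt_le. apply (Rmult_lt_compat_r (Rabs D + 1)) in HM; [|exact HD1].
    unfold Rdiv in HM. rewrite Rmult_assoc, Rinv_l in HM by lra. lra. }
  pose proof (Rle_abs D).
  replace (f u v - f t x - (pt f t x * (u - t) + px f t x * (v - x)))
    with (f u v - (f t x + (pt f t x * (u - t) + px f t x * (v - x)))) by ring.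
  eapply Rle_trans; [exact HD|]. simpl.
  assert (0 <= M * M) by nra.
  nra.
Qed.

Lemma chain (f : R -> R -> R) (g : R -> R) (s dg lx ly : R) :
  differentiable_pt_lim f s (g s) lx ly -> is_derive g s dg ->
  is_derive (fun r => f r (g r)) s (lx + ly * dg).
Proof.
  intros Hf Hg. apply is_derive_Reals.
  replace (lx + ly * dg) with (lx * 1 + ly * dg) by ring.
  apply (derivable_pt_lim_comp_2d f (fun r => r) g s lx ly 1 dg).
  - exact Hf.
  - apply derivable_pt_lim_id.
  - apply is_derive_Reals; exact Hg.
Qed.

Lemma is_derive_eq (f : R -> R) (x l l' : R) : is_derive f x l -> l = l' -> is_derive f x l'.
Proof. intros H E; rewrite <- E; exact H. Qed.

Lemma deriv_uniq (f : R -> R) x l1 l2 : is_derive f x l1 -> is_derive f x l2 -> l1 = l2.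
Proof.
  intros H1 H2. apply is_derive_unique in H1. apply is_derive_unique in H2.
  rewrite <- H1, <- H2. reflexivity.
Qed.

Lemma deriv0_const (f : R -> R) lo hi :
  (forall y, lo < y < hi -> is_derive f y 0) ->
  forall y z, lo < y < hi -> lo < z < hi -> f y = f z.
Proof.
  intros H y z Hy Hz.
  assert (Hin : forall r, Rmin y z <= r <= Rmax y z -> lo < r < hi).
  { intros r Hr. destruct (Rle_dec y z).
    - rewrite Rmin_left, Rmax_right in Hr by lra. lra.
    - rewrite Rmin_right, Rmax_left in Hr by lra. lra. }
  destruct (MVT_gen f y z (fun _ => 0)) as [c [_ Hc]].
  - intros r Hr. apply H. apply Hin. lra.
  - intros r Hr. apply continuity_pt_filterlim.
    apply (ex_derive_continuous (K := R_AbsRing) (V := R_NormedModule) f r).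
    exists 0. apply H. apply Hin. exact Hr.
  - lra.
Qed.

Lemma deriv0_const_R (f : R -> R) :
  (forall y, is_derive f y 0) -> forall y z, f y = f z.
Proof.
  intros H y z. apply (deriv0_const f (Rmin y z - 1) (Rmax y z + 1)).
  - intros; apply H.
  - pose proof (Rmin_l y z); pose proof (Rmax_l y z); lra.
  - pose proof (Rmin_r y z); pose proof (Rmax_r y z); lra.
Qed.

Lemma right_lim_const (g : R -> R) c l T : 0 < T ->
  (forall s, 0 < s < T -> g s = c) -> filterlim g (at_right 0) (locally l) -> l = c.
Proof.
  intros HT Hg Hl.
  apply (filterlim_locally_unique (K := R_AbsRing) (V := R_NormedModule) (F := at_right 0)
    (FF := Proper_StrongProper _ (at_right_proper_filter 0)) g l c).
  - exact Hl.
  - apply (filterlim_ext_loc (fun _ => c)).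
    + exists (mkposreal T HT). intros y Hy Hy0.
      change (Rabs (y - 0) < T) in Hy. apply Rabs_def2 in Hy.
      symmetry. apply Hg. lra.
    + apply filterlim_const.
Qed.

Lemma lim_comp2d (f : R -> R -> R) a b (F : (R -> Prop) -> Prop) (FF : Filter F) (g h : R -> R) :
  continuity_2d_pt f a b -> filterlim g F (locally a) -> filterlim h F (locally b) ->
  filterlim (fun s => f (g s) (h s)) F (locally (f a b)).
Proof.
  intros Hf Hg Hh. apply filterlim_locally. intros eps.
  destruct (Hf eps) as [d Hd].
  pose proof (proj1 (filterlim_locally g a) Hg d) as Hg'.
  pose proof (proj1 (filterlim_locally h b) Hh d) as Hh'.
  generalize (filter_and _ _ Hg' Hh'). apply filter_imp. intros s [H1 H2].
  apply Hd; assumption.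
Qed.

Lemma lim_id_right : filterlim (fun s : R => s) (at_right 0) (locally 0).
Proof.
  intros P [eps HP]. exists eps. intros y Hy _. apply HP. exact Hy.
Qed.

Lemma cont_sub a b : continuity_2d_pt (fun p q => p - q) a b.
Proof.
  intros eps. assert (Hd : 0 < eps / 2) by (pose proof (cond_pos eps); lra).
  exists (mkposreal _ Hd). intros u v Hu Hv. simpl in *.
  replace (u - v - (a - b)) with ((u - a) - (v - b)) by ring.
  eapply Rle_lt_trans; [apply Rabs_triang|]. rewrite Rabs_Ropp. lra.
Qed.

Lemma lim_sub (f g : R -> R) a b (F : (R -> Prop) -> Prop) (FF : Filter F) :
  filterlim f F (locally a) -> filterlim g F (locally b) ->
  filterlim (fun s => f s - g s) F (locally (a - b)).
Proof.
  intros Hf Hg.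
  apply (lim_comp2d (fun p q => p - q) a b F FF f g); auto.
  apply cont_sub.
Qed.

Theorem theorem7p1 (T : R) (u eta : R -> R -> R)
  (hT : 0 < T)
  (hu_smooth : exists eps, 0 < eps /\ smooth_on (fun t x => - eps < t < T) u)
  (hu_per : forall t x, 0 <= t < T -> u t (x + 1) = u t x)
  (heta_per : forall t x, 0 <= t < T -> eta t (x + 1) = eta t x + 1)
  (heta0 : forall x, eta 0 x = x)
  (heta_cont0 : forall x, filterlim (fun s => eta s x) (at_right 0) (locally (eta 0 x)))
  (heta_ode : forall t x, 0 < t < T -> is_derive (fun s => eta s x) t (u t (eta t x))) :
  ((forall t x, 0 <= t < T -> muB_lhs u t x = 0) <->
   (forall t x, 0 < t < T -> horiz_accel eta t x = 0)) /\
  ((forall t x, 0 <= t < T -> muB_lhs u t x = 0) ->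
   exists delta, 0 < delta /\ delta <= T /\
     forall t x, 0 <= t < delta -> 0 <= x <= 1 ->
       eta t x = x + t * (u 0 x - u 0 0) + eta t 0).
Proof.
  destruct hu_smooth as [e [He Hs]].
  set (a := fun t y => pt u t y + px u t y * u t y).
  assert (Hdiff : forall t y, 0 <= t < T -> differentiable_pt_lim u t y (pt u t y) (px u t y)).
  { intros t y Ht. eapply smooth_diff; [exact Hs| lra]. }
  assert (Hcont : forall t y, 0 <= t < T -> continuity_2d_pt u t y).
  { intros t y Ht. destruct (Hs nil t y ltac:(lra)) as [_ [_ H]]. apply cont2d_of_cont. exact H. }
  assert (Hpt_eta : forall t x, 0 < t < T -> pt eta t x = u t (eta t x)).
  { intros t x Ht. unfold pt. apply is_derive_unique. apply heta_ode; auto. }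
  assert (Hch : forall t x, 0 < t < T -> is_derive (fun s => u s (eta s x)) t (a t (eta t x))).
  { intros t x Ht. unfold a. apply chain. apply Hdiff; lra. apply heta_ode; exact Ht. }
  assert (Hacc : forall t x, 0 < t < T -> pt (pt eta) t x = a t (eta t x)).
  { intros t x Ht. unfold pt at 1.
    rewrite (Derive_ext_loc _ (fun s => u s (eta s x))).
    - apply is_derive_unique. apply Hch; exact Ht.
    - apply (filter_imp (fun s => 0 < s < T)); [| apply locally_interval; exact Ht].
      intros s Hs'. apply Hpt_eta. exact Hs'. }
  assert (Hexy : forall l t y, 0 <= t < T -> ex_derive (fun z => iter_partial l u t z) y).
  { intros l t y Ht. apply (Hs l t y). lra. }
  assert (Hext : forall l t y, 0 <= t < T -> ex_derive (fun s => iter_partial l u s y) t).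
  { intros l t y Ht. apply (Hs l t y). lra. }
  set (A1 := fun t y => px (pt u) t y + (px (px u) t y * u t y + px u t y * px u t y)).
  assert (HdA : forall t y, 0 <= t < T -> is_derive (fun z => a t z) y (A1 t y)).
  { intros t y Ht. unfold a, A1. auto_derive.
    - repeat split; [apply (Hexy (true::nil)) | apply (Hexy (false::nil)) | apply (Hexy nil)]; exact Ht.
    - unfold px; ring. }
  assert (HdA1 : forall t y, 0 <= t < T -> is_derive (fun z => A1 t z) y (muB_lhs u t y)).
  { intros t y Ht. unfold A1, muB_lhs. auto_derive.
    - repeat split;
      [apply (Hexy (false::true::nil)) | apply (Hexy (false::false::nil)) | apply (Hexy nil)
      | apply (Hexy (false::nil)) | apply (Hexy (false::nil))]; exact Ht.
    - unfold px; ring. }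
  assert (Hper_a : forall t y, 0 < t < T -> a t (y + 1) = a t y).
  { intros t y Ht. unfold a.
    assert (E1 : pt u t (y+1) = pt u t y).
    { unfold pt. apply Derive_ext_loc.
      apply (filter_imp (fun s => 0 < s < T)); [| apply locally_interval; exact Ht].
      intros s Hs'. apply hu_per; lra. }
    assert (E2 : px u t (y+1) = px u t y).
    { unfold px.
      assert (Hd1 : is_derive (fun z => z + 1) y 1) by (auto_derive; [exact I | ring]).
      pose proof (Derive_correct _ _ (Hexy nil t (y + 1) ltac:(lra))) as Hd2. simpl in Hd2.
      pose proof (is_derive_comp (fun z => u t z) (fun z => z + 1) y _ _ Hd2 Hd1) as Hd3.
      symmetry. apply is_derive_unique.
      apply (is_derive_ext (fun z => u t (z + 1))).
      - intros z. apply hu_per. lra.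
      - replace (Derive (fun z => u t z) (y + 1)) with (scal (1:R) (Derive (fun z => u t z) (y + 1))).
        + exact Hd3.
        + unfold scal; simpl; unfold mult; simpl. ring.
        }
    rewrite E1, E2, hu_per by lra. reflexivity. }
  assert (Hconst_of_muB : forall t, 0 < t < T -> (forall y, muB_lhs u t y = 0) ->
            forall y, a t y = a t 0).
  { intros t Ht Hm.
    assert (Hq : forall y, A1 t y = A1 t 0).
    { intros y. apply (deriv0_const_R (fun z => A1 t z)). intros z. rewrite <- (Hm z). apply HdA1. lra. }
    assert (Hl : forall y, a t y - A1 t 0 * y = a t 0 - A1 t 0 * 0).
    { intros y. apply (deriv0_const_R (fun z => a t z - A1 t 0 * z)). intros y0.
      apply (is_derive_eq (fun z => a t z - A1 t 0 * z) y0 (A1 t y0 - A1 t 0 * 1)).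
      - auto_derive.
        + exists (A1 t y0). apply (HdA t y0). lra.
        + replace (Derive (fun x : R => a t x) y0) with (A1 t y0) by (symmetry; apply is_derive_unique; apply HdA; lra). ring.
      - rewrite (Hq y0); ring. }
    assert (Hq0 : A1 t 0 = 0).
    { pose proof (Hl 1). pose proof (Hper_a t 0 Ht). rewrite Rplus_0_l in H0. lra. }
    intros y. pose proof (Hl y). rewrite Hq0 in H. lra. }
  assert (Hmu_of_const : forall t, 0 < t < T -> (forall y, a t y = a t 0) ->
            forall y, muB_lhs u t y = 0).
  { intros t Ht Hc.
    assert (HA : forall y, A1 t y = 0).
    { intros y. apply (deriv_uniq (fun z => a t z) y).
      - apply HdA. lra.
      - apply (is_derive_ext (fun _ => a t 0)). intros; symmetry; apply Hc.
        auto_derive; try exact I; try ring. }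
    intros y. apply (deriv_uniq (fun z => A1 t z) y).
    - apply HdA1. lra.
    - apply (is_derive_ext (fun _ => 0)). intros; symmetry; apply HA.
      auto_derive; try exact I; try ring. }
  assert (HperZ : forall t, 0 < t < T -> forall k y, a t (y + IZR k) = a t y).
  { intros t Ht k. induction k using Z.peano_ind; intros y.
    - rewrite Rplus_0_r. reflexivity.
    - rewrite succ_IZR. replace (y + (IZR k + 1)) with ((y + IZR k) + 1) by ring.
      rewrite Hper_a by exact Ht. apply IHk.
    - rewrite <- Z.sub_1_r, minus_IZR.
      replace (y + (IZR k - 1)) with ((y - 1) + IZR k) by ring.
      rewrite IHk. rewrite <- (Hper_a t (y - 1) Ht). f_equal; ring. }
  assert (Hulim : forall x, filterlim (fun s => u s (eta s x)) (at_right 0) (locally (u 0 x))).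
  { intros x. pattern x at 2. rewrite <- (heta0 x).
    apply (lim_comp2d u 0 (eta 0 x) (at_right 0) _ (fun s => s) (fun s => eta s x)).
    - rewrite heta0. apply Hcont. lra.
    - exact lim_id_right.
    - apply heta_cont0. }
  assert (Hflow : (forall s x, 0 < s < T -> a s (eta s x) = a s (eta s 0)) ->
     forall t x, 0 <= t < T -> eta t x = x + t * (u 0 x - u 0 0) + eta t 0).
  { intros Hc t x Ht.
    set (G := fun s => u s (eta s x) - u s (eta s 0)).
    set (b := u 0 x - u 0 0).
    assert (HT2 : 0 < T / 2 < T) by lra.
    assert (HG : forall s, 0 < s < T -> G s = G (T / 2)).
    { intros s Hs'. apply (deriv0_const G 0 T); [| exact Hs' | exact HT2].
      intros r Hr. unfold G.
      apply (is_derive_eq _ r (a r (eta r x) - a r (eta r 0))).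
      - apply (is_derive_minus (fun s => u s (eta s x)) (fun s => u s (eta s 0))); apply Hch; exact Hr.
      - rewrite Hc by exact Hr. ring. }
    assert (Hb : b = G (T / 2)).
    { apply (right_lim_const G (G (T/2)) b T hT HG).
      unfold G, b. apply lim_sub; [apply filter_filter | apply Hulim | apply Hulim]. }
    set (H := fun s => eta s x - eta s 0 - b * s).
    assert (HH : forall s, 0 < s < T -> H s = H (T / 2)).
    { intros s Hs'. apply (deriv0_const H 0 T); [| exact Hs' | exact HT2].
      intros r Hr. unfold H.
      apply (is_derive_eq _ r (u r (eta r x) - u r (eta r 0) - b * 1)).
      - apply (is_derive_minus (fun s => eta s x - eta s 0) (fun s => b * s)).
        + apply (is_derive_minus (fun s => eta s x) (fun s => eta s 0)); apply heta_ode; exact Hr.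
        + auto_derive; try exact I; try ring.
      - fold (G r). rewrite (HG r Hr), <- Hb. ring. }
    assert (Hx : x = H (T / 2)).
    { apply (right_lim_const H (H (T/2)) x T hT HH).
      unfold H. replace x with (x - 0 - b * 0) at 1 by ring.
      apply lim_sub; [apply filter_filter | |].
      - apply lim_sub; [apply filter_filter | |].
        + pose proof (heta_cont0 x) as Hc0. rewrite heta0 in Hc0. exact Hc0.
        + pose proof (heta_cont0 0) as Hc0. rewrite heta0 in Hc0. exact Hc0.
      - apply (filterlim_filter_le_1 (F := locally 0)).
        + apply filter_le_within.
        + apply (ex_derive_continuous (K:=R_AbsRing) (V:=R_NormedModule) (fun s => b * s) 0).
          auto_derive. exact I. }
    destruct (Req_dec t 0) as [Ht0 | Ht0].
    - subst t. rewrite !heta0. ring.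
    - assert (Ht' : 0 < t < T) by lra.
      pose proof (HH t Ht'). unfold H in H0. unfold H in Hx. fold b. lra. }
  assert (Fwd : (forall t x, 0 <= t < T -> muB_lhs u t x = 0) ->
      forall s y, 0 < s < T -> a s y = a s 0).
  { intros Hm s y Hs'. apply Hconst_of_muB; [exact Hs' |]. intros; apply Hm; lra. }
  split.
  - split.
    + intros Hm t x Ht. unfold horiz_accel. rewrite Hacc by exact Ht.
      rewrite (RInt_ext _ (fun _ => a t 0)).
      * rewrite RInt_const. rewrite (Fwd Hm t (eta t x) Ht).
        unfold scal; simpl; unfold mult; simpl. ring.
      * intros y _. rewrite Hacc by exact Ht. apply Fwd; auto.
    + intros Hh.
      assert (Hc : forall s x, 0 < s < T -> a s (eta s x) = a s (eta s 0)).
      { intros s x Hs'. pose proof (Hh s x Hs') as H1; pose proof (Hh s 0 Hs') as H2.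
        unfold horiz_accel in H1, H2. rewrite Hacc in H1, H2 by exact Hs'. lra. }
      assert (Hf := Hflow Hc).
      assert (Hall : forall t z, 0 < t < T -> a t z = a t (eta t 0)).
      { intros t z Ht.
        set (phi := fun y => y + t * (u 0 y - u 0 0) + eta t 0).
        assert (Hphi : forall y, eta t y = phi y) by (intros; apply Hf; lra).
        assert (Hcphi : continuity phi).
        { intros y. apply continuity_pt_filterlim.
          apply (ex_derive_continuous (K:=R_AbsRing) (V:=R_NormedModule) phi y).
          unfold phi. auto_derive.
          apply (Hexy nil 0 y). lra. }
        assert (Hp0 : phi 0 = eta t 0) by (rewrite <- Hphi; reflexivity).
        assert (Hp1 : phi 1 = eta t 0 + 1).
        { rewrite <- Hphi. rewrite <- (heta_per t 0) by lra. f_equal; ring. }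
        set (k := Int_part (z - eta t 0)).
        destruct (base_Int_part (z - eta t 0)) as [Hk1 Hk2]. fold k in Hk1, Hk2.
        set (w := z - IZR k).
        destruct (IVT_gen phi 0 1 w Hcphi) as [y [Hy Hy2]].
        { rewrite Hp0, Hp1. rewrite Rmin_left, Rmax_right by lra. unfold w. lra. }
        replace z with (w + IZR k) by (unfold w; ring).
        rewrite (HperZ t Ht). rewrite <- Hy2, <- Hphi. apply Hc. exact Ht. }
      assert (Hpos : forall t x, 0 < t < T -> muB_lhs u t x = 0).
      { intros t x Ht. apply Hmu_of_const; [exact Ht |].
        intros y. rewrite (Hall t y Ht), (Hall t 0 Ht). reflexivity. }
      intros t x Ht. destruct (Req_dec t 0) as [Ht0 | Ht0]; [| apply Hpos; lra].
      subst t.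
      apply (right_lim_const (fun s => muB_lhs u s x) 0 (muB_lhs u 0 x) T hT).
      * intros s Hs'. apply Hpos. exact Hs'.
      * apply (filterlim_filter_le_1 (F := locally 0)).
        -- apply filter_le_within.
        -- apply (ex_derive_continuous (K:=R_AbsRing) (V:=R_NormedModule) (fun s => muB_lhs u s x) 0).
           unfold muB_lhs. auto_derive.
           repeat split;
           [apply (Hext (false::false::true::nil)) | apply (Hext (false::nil))
           | apply (Hext (false::false::nil)) | apply (Hext nil)
           | apply (Hext (false::false::false::nil))]; lra.
  - intros Hm. exists T. split; [exact hT|]. split; [lra|].
    intros t x Ht _. apply Hflow; [| exact Ht].
    intros s y Hs'. rewrite (Fwd Hm s (eta s y) Hs'), (Fwd Hm s (eta s 0) Hs'). reflexivity.
Qed.
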